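(* Let $\lambda\ge 0$ and $\lambda_1,\dots,\lambda_M>0$. Suppose $g_1,\dots,g_M$ are $C^1$ functions on $[0,P)\times[0,\infty)$ (for some $P>0$), and write $t(p,v)=\sum_{\gamma=1}^M g_\gamma(p,v)$. Assume they satisfy: - $\lambda+t(p,v)>0$ on the whole domain; - the system of PDEs $$\frac{\partial g_\rho}{\partial p}(p,v)=\frac{1}{\lambda+t(p,v)}\,\frac{\partial g_\rho}{\partial v}(p,v),\qquad \rho=1,\dots,M;$$ - the initial conditions $g_\rho(0,v)=\big(\tfrac{1}{\lambda_\rho}+v\big)^{-1}$. Then for all $(p,v)$ in the domain and all $\rho$, $$g_\rho(p,v)=\Big(\frac{1}{\lambda_\rho}+v+\frac{p}{\lambda+\sum_{\gamma=1}^M g_\gamma(p,v)}\Big)^{-1}.$$ In particular, $$t(p,v)=\sum_\rho\Big(\tfrac{1}{\lambda_\rho}+v+\tfrac{p}{\lambda+t(p,v)}\Big)^{-1}.$$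
   Context: This PDE is the continuous approximation to the dataset-averaged diagonal entries $g_\rho(p,v)=\langle\tilde{\mathbf{G}}(p,v)_{\rho\rho}\rangle$, where $$\tilde{\mathbf{G}}(p,v)=\Big(\tfrac{1}{\lambda}\mathbf{\Phi}\mathbf{\Phi}^\top+\mathbf{\Lambda}^{-1}+v\mathbf{I}\Big)^{-1},$$ $\mathbf{\Phi}$ is the $M\times p$ matrix of kernel eigenfunctions evaluated at $p$ samples, and $\mathbf{\Lambda}={\rm diag}(\lambda_\rho)$. The number of samples $p$ is treated as a continuous variable. *)

(* Defs.v *)
From Stdlib Require Import Reals Lra List.
Import ListNotations.
Open Scope R_scope.

Definition in_dom (P p v : R) : Prop := 0 <= p < P /\ 0 <= v.

(* Finite sum over indices 0..M-1 (index rho = 1..M in the paper is rho-1 here). *)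
Definition sumM (M : nat) (f : nat -> R) : R :=
  fold_right Rplus 0 (map f (seq 0 M)).

Definition tfun (M : nat) (g : nat -> R -> R -> R) (p v : R) : R :=
  sumM M (fun r => g r p v).

(* Partial derivative in p at (p,v), taken within the domain (one-sided at the boundary). *)
Definition has_pderiv_p (P : R) (f : R -> R -> R) (p v l : R) : Prop :=
  limit1_in (fun h => (f (p + h) v - f p v) / h)
            (fun h => h <> 0 /\ in_dom P (p + h) v) l 0.

Definition has_pderiv_v (P : R) (f : R -> R -> R) (p v l : R) : Prop :=
  limit1_in (fun h => (f p (v + h) - f p v) / h)
            (fun h => h <> 0 /\ in_dom P p (v + h)) l 0.

Definition cont_on_dom (P : R) (f : R -> R -> R) : Prop :=
  forall p v, in_dom P p v ->
  forall eps, 0 < eps -> exists delta, 0 < delta /\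
    forall p' v', in_dom P p' v' -> Rabs (p' - p) < delta -> Rabs (v' - v) < delta ->
      Rabs (f p' v' - f p v) < eps.

Definition C1_on (P : R) (f fp fv : R -> R -> R) : Prop :=
  cont_on_dom P f /\ cont_on_dom P fp /\ cont_on_dom P fv /\
  (forall p v, in_dom P p v -> has_pderiv_p P f p v (fp p v) /\ has_pderiv_v P f p v (fv p v)).

(* Main.v *)
From Stdlib Require Import Reals Lra List FunctionalExtensionality.
From Coquelicot Require Import Coquelicot.
Require Import Defs.
Open Scope R_scope.

Definition clamp (a b x : R) := Rmax a (Rmin b x).

Lemma clamp_lip a b x y : a <= b -> Rabs (clamp a b y - clamp a b x) <= Rabs (y - x).
Proof. intros; unfold clamp, Rmax, Rmin; repeat destruct Rle_dec; unfold Rabs;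
  repeat destruct Rcase_abs; lra. Qed.

Lemma clamp_in a b x : a <= b -> a <= clamp a b x <= b.
Proof. intros; unfold clamp, Rmax, Rmin; repeat destruct Rle_dec; lra. Qed.

Lemma clamp_id a b x : a <= x <= b -> clamp a b x = x.
Proof. intros; unfold clamp, Rmax, Rmin; repeat destruct Rle_dec; lra. Qed.

Definition rcont (a b : R) (F : R -> R) := forall x, a <= x <= b -> forall eps, 0 < eps ->
  exists d, 0 < d /\ forall y, a <= y <= b -> Rabs (y - x) < d -> Rabs (F y - F x) < eps.

Lemma rcont_clamp a b F x : a <= b -> rcont a b F -> continuity_pt (fun y => F (clamp a b y)) x.
Proof.
  intros Hab HF eps Heps.
  destruct (HF (clamp a b x) (clamp_in a b x Hab) eps Heps) as [d [Hd H]].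
  exists d; split; [lra|]. intros y [_ Hy]. unfold R_dist, dist in *; simpl in *. unfold R_dist in *.
  apply H. now apply clamp_in. pose proof (clamp_lip a b x y Hab). lra.
Qed.

Lemma mono a b F F' : a <= b ->
  (forall x, continuity_pt (fun y => F (clamp a b y)) x) ->
  (forall x, a < x < b -> derivable_pt_lim F x (F' x)) ->
  (forall x, a < x < b -> 0 <= F' x) -> F a <= F b.
Proof.
  intros Hab Hc Hd Hp.
  destruct (Req_dec a b) as [->|Hne]; [lra|].
  set (G := fun x => if Rlt_dec a x then if Rlt_dec x b then F' x else 0 else 0).
  destruct (MVT_gen (fun y => F (clamp a b y)) a b G) as [c [Hc1 Hc2]].
  - rewrite (Rmin_left a b), (Rmax_right a b) by lra. intros x Hx. apply is_derive_Reals.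
    assert (HG : G x = F' x) by (unfold G; repeat match goal with |- context[Rlt_dec ?u ?v] => destruct (Rlt_dec u v) end; lra).
    rewrite HG.
    intros eps Heps. destruct (Hd x Hx eps Heps) as [del Hdel].
    assert (Hm : 0 < Rmin del (Rmin (x - a) (b - x))).
    { apply Rmin_pos; [apply cond_pos| apply Rmin_pos; lra]. }
    exists (mkposreal _ Hm). intros h Hh0 Hh. simpl in Hh.
    rewrite (clamp_id a b x), (clamp_id a b (x+h)).
    + apply Hdel; auto. eapply Rlt_le_trans; [exact Hh| apply Rmin_l].
    + assert (Rabs h < Rmin (x - a) (b - x)) by (eapply Rlt_le_trans; [exact Hh| apply Rmin_r]).
      pose proof (Rmin_l (x-a) (b-x)); pose proof (Rmin_r (x-a) (b-x)).
      revert H; unfold Rabs; destruct Rcase_abs; intros; lra.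
    + lra.
  - intros; apply Hc.
  - rewrite (Rmin_left a b), (Rmax_right a b) in Hc1 by lra.
    rewrite !clamp_id in Hc2 by lra.
    assert (0 <= G c) by (unfold G; repeat match goal with |- context[Rlt_dec ?u ?v] => destruct (Rlt_dec u v) end; try lra; apply Hp; lra).
    assert (0 <= G c * (b - a)) by (apply Rmult_le_pos; lra). lra.
Qed.
Lemma pderiv_p_real P f p v l : 0 < p < P -> 0 <= v -> has_pderiv_p P f p v l ->
  derivable_pt_lim (fun x => f x v) p l.
Proof.
  intros Hp Hv H eps Heps. destruct (H eps Heps) as [alp [Halp H1]].
  simpl in H1; unfold R_dist in H1.
  assert (Hm : 0 < Rmin alp (Rmin p (P - p))) by (repeat apply Rmin_pos; lra).
  exists (mkposreal _ Hm). intros h Hh0 Hh; simpl in Hh.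
  pose proof (Rmin_l alp (Rmin p (P-p))). pose proof (Rmin_r alp (Rmin p (P-p))).
  pose proof (Rmin_l p (P-p)). pose proof (Rmin_r p (P-p)).
  apply H1. split.
  - split; auto. unfold in_dom. revert Hh; unfold Rabs; destruct Rcase_abs; intros; lra.
  - rewrite Rminus_0_r; lra.
Qed.

Lemma mvt2 f f' x y : x <> y ->
  (forall z, Rmin x y <= z <= Rmax x y -> derivable_pt_lim f z (f' z)) ->
  exists xi, Rabs (xi - x) <= Rabs (y - x) /\ f y - f x = f' xi * (y - x).
Proof.
  intros Hne H. destruct (Rlt_or_le x y) as [Hl|Hl].
  - rewrite Rmin_left, Rmax_right in H by lra.
    destruct (MVT_cor2 f f' x y Hl H) as [c [Hc1 Hc2]]. exists c; split; auto.
    rewrite !Rabs_right by lra. lra.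
  - rewrite Rmin_right, Rmax_left in H by lra.
    assert (Hl' : y < x) by lra.
    destruct (MVT_cor2 f f' y x Hl' H) as [c [Hc1 Hc2]]. exists c; split.
    + rewrite !Rabs_left1 by lra. lra.
    + lra.
Qed.

Lemma chain P f fp fv a c s : C1_on P f fp fv -> 0 < c -> 0 < s < P -> 0 < a - c*s ->
  derivable_pt_lim (fun s => f s (a - c*s)) s (fp s (a - c*s) - c * fv s (a - c*s)).
Proof.
  intros [Hf [Hfp [Hfv Hd]]] Hc Hs Hw.
  set (w := a - c*s) in *.
  intros eps Heps.
  assert (He1 : 0 < eps / (2*(c+1))) by (apply Rdiv_lt_0_compat; lra).
  assert (Hdom : in_dom P s w) by (unfold in_dom; lra).
  destruct (Hd s w Hdom) as [_ Hv].
  destruct (Hv _ He1) as [alp1 [Halp1 H1]]. simpl in H1; unfold R_dist in H1.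
  assert (He2 : 0 < eps/2) by lra.
  destruct (Hfp s w Hdom _ He2) as [d2 [Hd2 H2]].
  assert (Hm : 0 < Rmin (Rmin (s/2) ((P-s)/2)) (Rmin (w/(2*(c+1))) (Rmin (alp1/(c+1)) (d2/(c+1))))).
  { repeat apply Rmin_pos; try lra; apply Rdiv_lt_0_compat; lra. }
  exists (mkposreal _ Hm). intros h Hh0 Hh; simpl in Hh.
  assert (Hb1 : Rabs h < s/2) by (eapply Rlt_le_trans; [exact Hh|]; eapply Rle_trans; [apply Rmin_l|apply Rmin_l]).
  assert (Hb2 : Rabs h < (P-s)/2) by (eapply Rlt_le_trans; [exact Hh|]; eapply Rle_trans; [apply Rmin_l|apply Rmin_r]).
  assert (Hb3 : Rabs h < w/(2*(c+1))) by (eapply Rlt_le_trans; [exact Hh|]; eapply Rle_trans; [apply Rmin_r|apply Rmin_l]).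
  assert (Hb4 : Rabs h < alp1/(c+1)) by (eapply Rlt_le_trans; [exact Hh|]; eapply Rle_trans; [apply Rmin_r|]; eapply Rle_trans; [apply Rmin_r|apply Rmin_l]).
  assert (Hb5 : Rabs h < d2/(c+1)) by (eapply Rlt_le_trans; [exact Hh|]; eapply Rle_trans; [apply Rmin_r|]; eapply Rle_trans; [apply Rmin_r|apply Rmin_r]).
  assert (Hch : Rabs h * c < Rabs h * (c+1)) by (apply Rmult_lt_compat_l; [apply Rabs_pos_lt; auto| lra]).
  assert (Hc3 : Rabs h * (c+1) < w/2).
  { apply (Rmult_lt_compat_r (c+1)) in Hb3; [|lra]. unfold Rdiv in Hb3.
    replace (w * / (2 * (c + 1)) * (c + 1)) with (w/2) in Hb3 by (field; lra). lra. }
  assert (Hc4 : Rabs h * (c+1) < alp1).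
  { apply (Rmult_lt_compat_r (c+1)) in Hb4; [|lra]. unfold Rdiv in Hb4.
    replace (alp1 * / (c + 1) * (c + 1)) with alp1 in Hb4 by (field; lra). lra. }
  assert (Hc5 : Rabs h * (c+1) < d2).
  { apply (Rmult_lt_compat_r (c+1)) in Hb5; [|lra]. unfold Rdiv in Hb5.
    replace (d2 * / (c + 1) * (c + 1)) with d2 in Hb5 by (field; lra). lra. }
  assert (Hhc : Rabs h <= Rabs h * (c+1)) by (pose proof (Rabs_pos h); nra).
  assert (Hhb : - Rabs h <= h <= Rabs h) by (unfold Rabs; destruct Rcase_abs; lra).
  set (w' := a - c*(s+h)).
  assert (Hw' : w' = w + - c * h) by (unfold w', w; ring).
  assert (Hw'pos : 0 < w').
  { rewrite Hw'. assert (c*h <= c * Rabs h) by (apply Rmult_le_compat_l; lra). lra. }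
  destruct (mvt2 (fun x => f x w') (fun x => fp x w') s (s+h)) as [xi [Hxi1 Hxi2]].
  { lra. }
  { intros z Hz. apply pderiv_p_real with P; [| lra|].
    - assert (Rmin s (s+h) >= s - Rabs h) by (unfold Rmin; destruct Rle_dec; lra).
      assert (Rmax s (s+h) <= s + Rabs h) by (unfold Rmax; destruct Rle_dec; lra). lra.
    - apply Hd.  assert (Rmin s (s+h) >= s - Rabs h) by (unfold Rmin; destruct Rle_dec; lra).
      assert (Rmax s (s+h) <= s + Rabs h) by (unfold Rmax; destruct Rle_dec; lra).
      unfold in_dom; lra. }
  replace (s + h - s) with h in Hxi1, Hxi2 by ring.
  assert (Hfpb : Rabs (fp xi w' - fp s w) < eps/2).
  { apply H2.
    - unfold in_dom. assert (Rabs (xi - s) < s/2) by lra.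
      assert (Rabs (xi - s) < (P-s)/2) by lra.
      revert H H0; unfold Rabs; destruct Rcase_abs; intros; lra.
    - lra.
    - rewrite Hw'. replace (w + - c * h - w) with (- c * h) by ring.
      rewrite Rabs_mult, Rabs_Ropp, (Rabs_right c) by lra. lra. }
  assert (Hk : - c * h <> 0) by (intro; apply Rmult_integral in H; destruct H; lra).
  assert (Hfvb : Rabs ((f s (w + - c * h) - f s w) / (- c * h) - fv s w) < eps / (2*(c+1))).
  { apply H1. split.
    - split; auto. unfold in_dom. rewrite <- Hw'. lra.
    - rewrite Rminus_0_r, Rabs_mult, Rabs_Ropp, (Rabs_right c) by lra. lra. }
  rewrite <- Hw' in Hfvb.
  change (f (s + h) (a - c * (s + h))) with (f (s+h) w'). change (f s (a - c * s)) with (f s w).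
  replace ((f (s + h) w' - f s w) / h - (fp s w - c * fv s w)) with
    ((fp xi w' - fp s w) + (- c) * ((f s w' - f s w) / (- c * h) - fv s w)).
  2:{ replace (f (s + h) w' - f s w) with ((f (s+h) w' - f s w') + (f s w' - f s w)) by ring.
      rewrite Hxi2. field. lra. }
  eapply Rle_lt_trans; [apply Rabs_triang|].
  rewrite Rabs_mult, Rabs_Ropp, (Rabs_right c) by lra.
  assert (c * Rabs ((f s w' - f s w) / (- c * h) - fv s w) <= c * (eps / (2 * (c + 1)))) by (apply Rmult_le_compat_l; lra).
  assert (c * (eps / (2 * (c + 1))) <= eps/2).
  { unfold Rdiv. replace (eps * / 2) with ((c+1) * (eps * / (2*(c+1)))) by (field; lra).
    apply Rmult_le_compat_r; [|lra]. left; exact He1. }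
  lra.
Qed.

Lemma fr_shift l z : fold_right Rplus z l = fold_right Rplus 0 l + z.
Proof. induction l as [|x l IH]; simpl; [lra| rewrite IH; ring]. Qed.

Lemma sumM_S M f : sumM (S M) f = sumM M f + f M.
Proof.
  unfold sumM. rewrite seq_S, map_app, fold_right_app. simpl.
  rewrite fr_shift. ring.
Qed.

Lemma sumM_ext M f g : (forall r, (r < M)%nat -> f r = g r) -> sumM M f = sumM M g.
Proof.
  induction M; intros H; [reflexivity|]. rewrite !sumM_S, IHM, H; auto.
Qed.

Lemma sumM_lin M x y f g : sumM M (fun r => x * f r - y * g r) = x * sumM M f - y * sumM M g.
Proof. induction M; [unfold sumM; simpl; ring|]. rewrite !sumM_S, IHM. ring. Qed.

Lemma deriv_sum M (F F' : nat -> R -> R) x :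
  (forall r, (r < M)%nat -> derivable_pt_lim (F r) x (F' r x)) ->
  derivable_pt_lim (fun y => sumM M (fun r => F r y)) x (sumM M (fun r => F' r x)).
Proof.
  induction M; intros H.
  - unfold sumM; simpl. apply derivable_pt_lim_const.
  - rewrite sumM_S.
    assert (E : (fun y => sumM (S M) (fun r => F r y)) = plus_fct (fun y => sumM M (fun r => F r y)) (F M)).
    { apply functional_extensionality; intro y; unfold plus_fct; apply sumM_S. }
    rewrite E. apply derivable_pt_lim_plus; auto.
Qed.

Lemma cont_sum M (F : nat -> R -> R) x :
  (forall r, (r < M)%nat -> continuity_pt (F r) x) ->
  continuity_pt (fun y => sumM M (fun r => F r y)) x.
Proof.
  induction M; intros H.
  - unfold sumM; simpl. apply continuity_pt_const. intros u v; reflexivity.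
  - assert (E : (fun y => sumM (S M) (fun r => F r y)) = plus_fct (fun y => sumM M (fun r => F r y)) (F M)).
    { apply functional_extensionality; intro y; unfold plus_fct; apply sumM_S. }
    rewrite E. apply continuity_pt_plus; auto.
Qed.

Lemma mono2 a' b' a b F F' : a' <= a -> a <= b -> b <= b' ->
  (forall x, continuity_pt (fun y => F (clamp a' b' y)) x) ->
  (forall x, a < x < b -> derivable_pt_lim F x (F' x)) ->
  (forall x, a < x < b -> 0 <= F' x) -> F a <= F b.
Proof.
  intros H1 H2 H3 Hc Hd Hp. apply (mono a b F F'); auto.
  intro x. apply continuity_pt_ext with (comp (fun y => F (clamp a' b' y)) (clamp a b)).
  - intro z. unfold comp. rewrite (clamp_id a' b' (clamp a b z)); auto.
    pose proof (clamp_in a b z H2). lra.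
  - apply continuity_pt_comp; auto.
    apply continuity_pt_ext with (fun y => id (clamp a b y)); [reflexivity|].
    apply rcont_clamp; auto. intros u _ eps Heps. exists eps; split; auto.
Qed.

Lemma dl_eq f x l l' : derivable_pt_lim f x l -> l = l' -> derivable_pt_lim f x l'.
Proof. intros H ->; exact H. Qed.

Lemma key (M : nat) (lam : R) (lams : nat -> R) (P : R)
  (g gp gv : nat -> R -> R -> R) :
  (forall r, (r < M)%nat -> C1_on P (g r) (gp r) (gv r)) ->
  (forall p v, in_dom P p v -> 0 < lam + tfun M g p v) ->
  (forall r p v, (r < M)%nat -> in_dom P p v ->
     gp r p v = / (lam + tfun M g p v) * gv r p v) ->
  (forall r v, (r < M)%nat -> 0 <= v -> g r 0 v = / (/ lams r + v)) ->
  forall p0 v0, in_dom P p0 v0 -> forall r, (r < M)%nat ->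
  g r p0 v0 = / (/ lams r + (v0 + / (lam + tfun M g p0 v0) * p0)).
Proof.
  intros HC Hpos Hpde Hinit p0 v0 Hdom0.
  set (t0 := tfun M g p0 v0).
  assert (Ht0 : 0 < lam + t0) by (apply Hpos; auto).
  set (c := / (lam + t0)).
  assert (Hc : 0 < c) by (apply Rinv_0_lt_compat; auto).
  set (a := v0 + c * p0).
  set (L := fun s => a - c * s).
  destruct Hdom0 as [[Hp0 HpP] Hv0].
  assert (HD : forall s, 0 <= s <= p0 -> in_dom P s (L s)).
  { intros s Hs. unfold in_dom, L, a. split; [lra|].
    assert (0 <= c * (p0 - s)) by (apply Rmult_le_pos; lra). nra. }
  assert (HI : forall s, 0 < s < p0 -> 0 < a - c * s).
  { intros s Hs. unfold a. assert (0 < c * (p0 - s)) by (apply Rmult_lt_0_compat; lra). nra. }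
  assert (HCg : forall F, cont_on_dom P F -> forall x,
            continuity_pt (fun y => F (clamp 0 p0 y) (L (clamp 0 p0 y))) x).
  { intros F HF x. apply (rcont_clamp 0 p0 (fun s => F s (L s))); [lra|].
    intros s Hs eps Heps. destruct (HF s (L s) (HD s Hs) eps Heps) as [d [Hd H]].
    assert (Hd' : 0 < d / (c+1)) by (apply Rdiv_lt_0_compat; lra).
    exists (d/(c+1)); split; auto. intros y Hy Hys. apply H; [apply HD; auto| |].
    - assert (d/(c+1) <= d).
      { unfold Rdiv. rewrite <- (Rmult_1_r d) at 2. apply Rmult_le_compat_l; [lra|].
        rewrite <- Rinv_1. apply Rinv_le_contravar; lra. }
      lra.
    - unfold L. replace (a - c*y - (a - c*s)) with (c * - (y - s)) by ring.
      rewrite Rabs_mult, Rabs_Ropp, (Rabs_right c) by lra.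
      apply (Rmult_lt_compat_l (c+1)) in Hys; [|lra].
      replace ((c+1) * (d/(c+1))) with d in Hys by (field; lra).
      pose proof (Rabs_pos (y - s)). nra. }
  set (phi := fun s => tfun M g s (L s)).
  set (Tv := fun s => sumM M (fun r => gv r s (L s))).
  assert (Hphic : forall x, continuity_pt (fun y => phi (clamp 0 p0 y)) x).
  { intro x. unfold phi, tfun. apply (cont_sum M (fun r y => g r (clamp 0 p0 y) (L (clamp 0 p0 y)))).
    intros r Hr. apply HCg. apply HC; auto. }
  assert (HTvc : forall x, continuity_pt (fun y => Tv (clamp 0 p0 y)) x).
  { intro x. unfold Tv. apply (cont_sum M (fun r y => gv r (clamp 0 p0 y) (L (clamp 0 p0 y)))).
    intros r Hr. apply HCg. apply HC; auto. }
  assert (Hphid : forall s, 0 < s < p0 ->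
            derivable_pt_lim phi s ((/ (lam + phi s) - c) * Tv s)).
  { intros s Hs. eapply dl_eq.
    - unfold phi, tfun. apply (deriv_sum M (fun r s => g r s (L s))
         (fun r s => gp r s (L s) - c * gv r s (L s))).
      intros r Hr. apply chain with (P := P); auto; lra.
    - transitivity (sumM M (fun r => / (lam + phi s) * gv r s (L s) - c * gv r s (L s))).
      + apply sumM_ext. intros r Hr. rewrite Hpde; auto. apply HD; lra.
      + rewrite sumM_lin. unfold Tv. ring. }
  set (k := fun s => Tv s * / ((lam + phi s) * (lam + t0))).
  assert (Hkc : forall x, 0 <= x <= p0 -> continuity_pt (fun y => k (clamp 0 p0 y)) x).
  { intros x Hx. unfold k.
    change (continuity_pt (div_fct (fun y => Tv (clamp 0 p0 y)) (fun y => (lam + phi (clamp 0 p0 y)) * (lam + t0))) x).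
    apply continuity_pt_div; auto.
    - change (continuity_pt ((fct_cte lam + fun y => phi (clamp 0 p0 y)) * fct_cte (lam + t0))%F x).
      apply continuity_pt_mult; [apply continuity_pt_plus|]; auto; apply continuity_pt_const; intros u v; reflexivity.
    - rewrite clamp_id by lra. apply Rgt_not_eq. apply Rmult_lt_0_compat; auto. apply Hpos. apply HD; auto. }
  destruct (continuity_ab_maj (fun y => k (clamp 0 p0 y)) 0 p0 Hp0 Hkc) as [Mx [HMx _]].
  set (B := k (clamp 0 p0 Mx)).
  assert (HkB : forall s, 0 <= s <= p0 -> k s <= B).
  { intros s Hs. pose proof (HMx s Hs). rewrite clamp_id in H by lra. exact H. }
  set (h := ((phi - fct_cte t0) * (phi - fct_cte t0) * comp exp (fct_cte (2*B) * id))%F).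
  assert (Hhp0 : phi p0 = t0).
  { unfold phi, t0. unfold L, a. replace (v0 + c * p0 - c * p0) with v0 by ring. reflexivity. }
  assert (Hphi : forall s, 0 <= s <= p0 -> phi s = t0).
  { intros s Hs.
    assert (Hle : h s <= h p0).
    { apply (mono2 0 p0 s p0 h (fun s => 2 * exp (2*B*s) * ((phi s - t0) * (phi s - t0)) * (B - k s))); try lra.
      - intro x. unfold h.
        change (continuity_pt
          (((fun y => phi (clamp 0 p0 y)) - fct_cte t0) * ((fun y => phi (clamp 0 p0 y)) - fct_cte t0) *
           comp exp (fct_cte (2*B) * (fun y => clamp 0 p0 y)))%F x).
        repeat apply continuity_pt_mult; try apply continuity_pt_minus; auto;
          try (apply continuity_pt_const; intros u v; reflexivity).
        apply continuity_pt_comp.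
        + apply continuity_pt_mult; [apply continuity_pt_const; intros u v; reflexivity|].
          apply continuity_pt_ext with (fun y => id (clamp 0 p0 y)); [reflexivity|].
          apply rcont_clamp; [lra|]. intros u _ eps Heps. exists eps; split; auto.
        + apply derivable_continuous_pt. apply derivable_pt_exp.
      - intros x Hx. eapply dl_eq.
        + unfold h. apply derivable_pt_lim_mult.
          * apply derivable_pt_lim_mult; apply derivable_pt_lim_minus;
              [apply Hphid; lra|apply derivable_pt_lim_const|apply Hphid; lra|apply derivable_pt_lim_const].
          * apply derivable_pt_lim_comp. apply derivable_pt_lim_mult.
            apply derivable_pt_lim_const. apply derivable_pt_lim_id. apply derivable_pt_lim_exp.
        + assert (Hq : 0 < lam + phi x) by (apply Hpos; apply HD; lra).
          unfold k, c, mult_fct, minus_fct, fct_cte, comp, id. field. lra.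
      - intros x Hx. apply Rmult_le_pos; [apply Rmult_le_pos|].
        + pose proof (exp_pos (2*B*x)); lra.
        + pose proof (Rle_0_sqr (phi x - t0)); unfold Rsqr in *; lra.
        + pose proof (HkB x ltac:(lra)); lra. }
    unfold h, mult_fct, minus_fct, fct_cte, comp, id in Hle.
    rewrite Hhp0 in Hle. replace (t0 - t0) with 0 in Hle by ring.
    pose proof (exp_pos (fct_cte (2 * B) s * s)). unfold fct_cte in H.
    assert ((phi s - t0) * (phi s - t0) = 0).
    { assert (0 <= (phi s - t0) * (phi s - t0)) by (pose proof (Rle_0_sqr (phi s - t0)); unfold Rsqr in *; lra).
      assert ((phi s - t0) * (phi s - t0) * exp (2*B*s) <= 0) by lra.
      nra. }
    nra. }
  intros r Hr.
  set (G := fun s => g r s (L s)).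
  assert (HGd : forall s, 0 < s < p0 -> derivable_pt_lim G s 0).
  { intros s Hs. change G with (fun s => g r s (a - c*s)). eapply dl_eq.
    apply (chain P (g r) (gp r) (gv r) a c s); [apply HC; auto | auto | lra | apply HI; lra].
    rewrite Hpde; [|auto|apply HD; lra]. change (tfun M g s (a - c * s)) with (phi s).
    rewrite Hphi by lra. unfold c. ring. }
  assert (HGc : forall x, continuity_pt (fun y => G (clamp 0 p0 y)) x).
  { intro x. apply HCg. apply HC; auto. }
  assert (E1 : G 0 <= G p0).
  { apply (mono2 0 p0 0 p0 G (fun _ => 0)); try lra; auto. intros; lra. }
  assert (E2 : (- G)%F 0 <= (- G)%F p0).
  { apply (mono2 0 p0 0 p0 (- G)%F (fun _ => - 0)); try lra.
    - intro x. change (continuity_pt (- (fun y => G (clamp 0 p0 y)))%F x).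
      apply continuity_pt_opp; auto.
    - intros x Hx. apply derivable_pt_lim_opp. auto.
    - intros; lra. }
  unfold opp_fct in E2.
  assert (G p0 = G 0) by lra.
  unfold G in H. unfold L at 1 in H. replace (a - c * p0) with v0 in H by (unfold a; ring).
  rewrite H. unfold L. replace (a - c * 0) with a by ring. rewrite Hinit; auto.
  all: try reflexivity.
  unfold a. assert (0 <= c * p0) by (apply Rmult_le_pos; lra). lra.
Qed.

Theorem proposition2 (M : nat) (lam : R) (lams : nat -> R) (P : R)
  (g gp gv : nat -> R -> R -> R) :
  0 <= lam ->
  (forall r, (r < M)%nat -> 0 < lams r) ->
  0 < P ->
  (forall r, (r < M)%nat -> C1_on P (g r) (gp r) (gv r)) ->
  (forall p v, in_dom P p v -> 0 < lam + tfun M g p v) ->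
  (forall r p v, (r < M)%nat -> in_dom P p v ->
     gp r p v = / (lam + tfun M g p v) * gv r p v) ->
  (forall r v, (r < M)%nat -> 0 <= v -> g r 0 v = / (/ lams r + v)) ->
  (forall r p v, (r < M)%nat -> in_dom P p v ->
     g r p v = / (/ lams r + v + p / (lam + sumM M (fun c => g c p v)))) /\
  (forall p v, in_dom P p v ->
     tfun M g p v = sumM M (fun r => / (/ lams r + v + p / (lam + tfun M g p v)))).
Proof.
  intros Hlam Hlams HP HC Hpos Hpde Hinit.
  pose proof (key M lam lams P g gp gv HC Hpos Hpde Hinit) as K.
  split.
  - intros r p v Hr Hd. rewrite (K p v Hd r Hr). unfold tfun. f_equal. unfold Rdiv. ring.
  - intros p v Hd. unfold tfun at 1. apply sumM_ext. intros r Hr.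
    rewrite (K p v Hd r Hr). f_equal. unfold Rdiv. ring.
Qed.
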